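(* Let $0\le q_0<q_1\le 1$, let $f_N^{(i)}$ and $F_N^{(i)}$ denote the probability mass function and cumulative distribution function of the binomial distribution $\mathrm{Bin}(N,q_i)$, $i\in\{0,1\}$, and let $N_R=N_R(N)$ be positive integers with $N_R\in\mathcal O(N)$. Define $$S_N=\sum_{k=1}^{N} f_N^{(1)}[k]\,\big(F_N^{(0)}[k-1]\big)^{N_R}.$$ Then $\lim_{N\to\infty}S_N=1$. *)

(* Defs.v *)
From HB Require Import structures.
From mathcomp Require Import all_boot all_order all_algebra.
From mathcomp Require Import all_classical all_reals all_analysis.
Set Implicit Arguments. Unset Strict Implicit. Unset Printing Implicit Defensive.
Import Order.TTheory GRing.Theory Num.Theory.
Local Open Scope ring_scope.

(* probability mass function of Bin(N, q) at k (0 for k > N since 'C(N,k)=0) *)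
Definition binom_pmf (R : realType) (N : nat) (q : R) (k : nat) : R :=
  'C(N, k)%:R * q ^+ k * (1 - q) ^+ (N - k).

Definition binom_cdf (R : realType) (N : nat) (q : R) (k : nat) : R :=
  \sum_(0 <= j < k.+1) binom_pmf N q j.

Definition S_seq (R : realType) (q0 q1 : R) (NR : nat -> nat) (N : nat) : R :=
  \sum_(1 <= k < N.+1) binom_pmf N q1 k * (binom_cdf N q0 k.-1) ^+ (NR N).

(* Main.v *)
Require Import Defs.
From HB Require Import structures.
From mathcomp Require Import all_boot all_order all_algebra.
From mathcomp Require Import all_classical all_reals all_analysis.
From mathcomp Require Import ring lra.
Import Order.TTheory GRing.Theory Num.Theory.
Import numFieldNormedType.Exports.
Local Open Scope classical_set_scope.
Local Open Scope ring_scope.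

Section Helpers.
Variable R : realType.
Implicit Types (q p a : R).

Lemma pmf_ge0 q N k : 0 <= q -> q <= 1 -> 0 <= binom_pmf N q k.
Proof.
move=> h0 h1; rewrite /binom_pmf.
by rewrite !mulr_ge0 // ?exprn_ge0 // subr_ge0.
Qed.

Lemma pmf_gen q N a :
  \sum_(k < N.+1) binom_pmf N q k * a ^+ k = (1 - q + q * a) ^+ N.
Proof.
rewrite exprDn; apply: eq_bigr => i _.
rewrite /binom_pmf -mulr_natl exprMn; ring.
Qed.

Lemma pmf_sum1 q N : \sum_(k < N.+1) binom_pmf N q k = 1.
Proof.
have := pmf_gen q N 1.
have -> : 1 - q + q * 1 = 1 by ring.
rewrite expr1n => <-.
by apply: eq_bigr => i _; rewrite expr1n mulr1.
Qed.

Lemma pmf_sym q N k : (k <= N)%N ->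
  binom_pmf N q k = binom_pmf N (1 - q) (N - k).
Proof.
move=> hk; rewrite /binom_pmf bin_sub // subKn //.
have -> : 1 - (1 - q) = q by ring.
ring.
Qed.

Lemma sum_sub_le (n : nat) (P Q : pred 'I_n) (F : 'I_n -> R) :
  (forall i, 0 <= F i) -> (forall i, P i -> Q i) ->
  \sum_(i < n | P i) F i <= \sum_(i < n | Q i) F i.
Proof.
move=> F0 PQ; rewrite [X in _ <= X](bigID P) /=.
have -> : \sum_(i < n | Q i && P i) F i = \sum_(i < n | P i) F i.
  by apply: eq_bigl => i; case: (boolP (P i)) => Pi; rewrite ?andbT ?andbF ?PQ.
by rewrite lerDl sumr_ge0.
Qed.

Lemma bernoulli_ineq (y : R) n : 0 <= y -> 1 + n%:R * (y - 1) <= y ^+ n.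
Proof.
move=> y0; elim: n => [|n IH]; first by rewrite mul0r addr0 expr0.
rewrite exprS -natr1.
have h : y * (1 + n%:R * (y - 1)) <= y * y ^+ n by rewrite ler_wpM2l.
apply: le_trans h.
have hn : 0 <= n%:R * (y - 1) ^+ 2 :> R by rewrite mulr_ge0 // sqr_ge0.
nra.
Qed.

End Helpers.

Section Chernoff.
Variable R : realType.

Lemma chernoff_tail (q p : R) : 0 <= q -> q < p -> p <= 1 ->
  exists2 d : R, 0 < d & forall N,
    \sum_(k < N.+1 | p * N%:R <= k%:R) binom_pmf N q k <= expR (- (d * N%:R)).
Proof.
move=> q0 qp p1.
pose s := (p - q) / 2.
have s0 : 0 < s by rewrite /s divr_gt0 // subr_gt0.
have s1 : s < 1 by rewrite /s; lra.
pose t := s / (1 - s).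
have ht : t * (1 - s) = s by rewrite /t divfK // subr_eq0 gt_eqF.
pose a := expR s.
have a0 : 0 <= a by apply: expR_ge0.
have ha : a - 1 <= t.
  have h1 : 1 - s <= expR (- s) by have := expR_ge1Dx (- s).
  have e : a * expR (- s) = 1 by rewrite /a expRxMexpNx_1.
  have : (a - 1) * (1 - s) <= t * (1 - s) by rewrite ht; nra.
  by rewrite ler_pM2r // subr_gt0.
pose d := s * p - q * t.
have dE : d = s * (p * (1 - s) - q) / (1 - s).
  rewrite /d /t; field; by rewrite subr_eq0 gt_eqF.
have d0 : 0 < d.
  rewrite dE divr_gt0 ?subr_gt0 // mulr_gt0 //.
  have : s * p <= s by nra.
  rewrite /s; nra.
exists d => // N.
have q1 : q <= 1 by lra.
have step1 : \sum_(k < N.+1 | p * N%:R <= k%:R) binom_pmf N q k <=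
    \sum_(k < N.+1 | p * N%:R <= k%:R) (binom_pmf N q k * expR (s * (k%:R - p * N%:R))).
  apply: ler_sum => k hk.
  rewrite -[X in X <= _]mulr1 ler_wpM2l ?pmf_ge0 //.
  have := expR_ge1Dx (s * (k%:R - p * N%:R)).
  have : 0 <= s * (k%:R - p * N%:R) by rewrite mulr_ge0 ?subr_ge0 // ltW.
  lra.
apply: (le_trans step1).
apply: (le_trans (@sum_sub_le R N.+1 (fun k : 'I_N.+1 => p * N%:R <= k%:R) xpredT
   (fun k : 'I_N.+1 => binom_pmf N q k * expR (s * (k%:R - p * N%:R))) _ _)).
all: try (by move=> k; rewrite mulr_ge0 ?pmf_ge0 ?expR_ge0).
all: try (by move=> ? ?).
have -> : \sum_(k < N.+1) binom_pmf N q k * expR (s * (k%:R - p * N%:R)) =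
    expR (- (s * p * N%:R)) * \sum_(k < N.+1) binom_pmf N q k * a ^+ k.
  rewrite mulr_sumr; apply: eq_bigr => k _.
  rewrite /a -expRM_natl.
  have -> : s * (k%:R - p * N%:R) = - (s * p * N%:R) + k%:R * s by ring.
  rewrite expRD; ring.
rewrite pmf_gen.
have h2 : (1 - q + q * a) ^+ N <= expR (N%:R * (q * (a - 1))).
  rewrite expRM_natl; apply: lerXn2r; rewrite ?nnegrE ?expR_ge0 //.
    by rewrite addr_ge0 ?mulr_ge0 // subr_ge0.
  have := expR_ge1Dx (q * (a - 1)); lra.
apply: (le_trans (ler_wpM2l (expR_ge0 _) h2)).
rewrite -expRD ler_expR.
have hN : 0 <= N%:R :> R by [].
have : q * (a - 1) <= q * t by rewrite ler_wpM2l.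
rewrite /d; nra.
Qed.

End Chernoff.

Section Lower.
Variable R : realType.

Lemma lower_tail (q p : R) : 0 < p -> p < q -> q <= 1 ->
  exists2 d : R, 0 < d & forall N,
    \sum_(k < N.+1 | k%:R < p * N%:R) binom_pmf N q k <= expR (- (d * N%:R)).
Proof.
move=> p0 pq q1.
have [d d0 H] := @chernoff_tail R (1 - q) (1 - p) ltac:(lra) ltac:(lra) ltac:(lra).
exists d => // N.
apply: le_trans (H N).
rewrite (reindex_inj rev_ord_inj) /=.
have E : forall j : 'I_N.+1, binom_pmf N q (rev_ord j) = binom_pmf N (1 - q) j.
  move=> j; rewrite /= subSS pmf_sym ?leq_subr // subKn //.
  by rewrite -ltnS ltn_ord.
under eq_bigr do rewrite E.
apply: sum_sub_le.
  by move=> i; apply: pmf_ge0; lra.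
move=> j /=; rewrite subSS natrB; last by rewrite -ltnS ltn_ord.
move=> h; lra.
Qed.

End Lower.

Section Bounds.
Variable R : realType.

Lemma cdf_ge0 (q : R) N k : 0 <= q -> q <= 1 -> 0 <= binom_cdf N q k.
Proof. by move=> *; rewrite /binom_cdf sumr_ge0 // => j _; rewrite pmf_ge0. Qed.

Lemma pmf_split (q : R) N k : (k <= N.+1)%N ->
  \sum_(0 <= j < k) binom_pmf N q j + \sum_(k <= j < N.+1) binom_pmf N q j = 1.
Proof.
move=> hk; rewrite -big_cat_nat //=.
by rewrite big_mkord pmf_sum1.
Qed.

Lemma cdf_le1 (q : R) N k : 0 <= q -> q <= 1 -> (k <= N)%N -> binom_cdf N q k <= 1.
Proof.
move=> q0 q1 hk; rewrite /binom_cdf -(pmf_split q N k.+1) //.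
by rewrite lerDl sumr_ge0 // => j _; rewrite pmf_ge0.
Qed.

Lemma cdf_lower (q p E : R) N k : 0 <= q -> q <= 1 -> (0 < k)%N -> (k <= N)%N ->
  p * N%:R <= k%:R ->
  \sum_(j < N.+1 | p * N%:R <= j%:R) binom_pmf N q j <= E ->
  1 - E <= binom_cdf N q k.-1.
Proof.
move=> q0 q1 k0 kN hk hE.
rewrite /binom_cdf prednK //.
have := pmf_split q N k (leqW kN).
suff : \sum_(k <= j < N.+1) binom_pmf N q j <= E by lra.
apply: le_trans hE.
have -> : \sum_(j < N.+1 | p * N%:R <= j%:R) binom_pmf N q j =
   \sum_(0 <= j < k | p * N%:R <= j%:R) binom_pmf N q j +
   \sum_(k <= j < N.+1 | p * N%:R <= j%:R) binom_pmf N q j.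
  by rewrite -big_cat_nat ?leqW // big_mkord.
have -> : \sum_(k <= i < N.+1 | p * N%:R <= i%:R) binom_pmf N q i =
    \sum_(k <= i < N.+1) binom_pmf N q i.
  rewrite big_mkcond /=; apply: eq_big_nat => i /andP[ki _].
  by rewrite ifT // (le_trans hk) // ler_nat.
by rewrite lerDr sumr_ge0 // => j _; rewrite pmf_ge0.
Qed.

End Bounds.

Arguments cdf_lower {R}.
Arguments cdf_ge0 {R}.
Arguments bernoulli_ineq {R}.

Section SB.
Variable R : realType.

Lemma S_upper (q0 q1 : R) N n : 0 <= q0 -> q0 <= 1 -> 0 <= q1 -> q1 <= 1 ->
  \sum_(1 <= k < N.+1) binom_pmf N q1 k * (binom_cdf N q0 k.-1) ^+ n <= 1.
Proof.
move=> a0 a1 b0 b1.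
apply: (@le_trans _ _ (\sum_(1 <= k < N.+1) binom_pmf N q1 k)).
  rewrite big_nat_cond [X in _ <= X]big_nat_cond; apply: ler_sum => k /andP[/andP[k1 kN] _].
  rewrite -[X in _ <= X]mulr1 ler_wpM2l ?pmf_ge0 // exprn_ile1 ?cdf_ge0 ?cdf_le1 //.
  by rewrite (leq_trans (leq_pred k)) // -ltnS.
rewrite -(@pmf_sum1 R q1 N).
have -> : \sum_(k < N.+1) binom_pmf N q1 k = \sum_(0 <= k < N.+1) binom_pmf N q1 k
  by rewrite big_mkord.
rewrite (big_ltn (m := 0)) //.
by rewrite lerDr pmf_ge0.
Qed.

Lemma S_lower (q0 q1 p E0 E1 : R) N n : 0 <= q0 -> q0 <= 1 -> 0 <= q1 -> q1 <= 1 ->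
  0 < p -> (0 < N)%N -> 0 <= E0 ->
  \sum_(k < N.+1 | p * N%:R <= k%:R) binom_pmf N q0 k <= E0 ->
  \sum_(k < N.+1 | k%:R < p * N%:R) binom_pmf N q1 k <= E1 ->
  1 - E1 - n%:R * E0 <= \sum_(1 <= k < N.+1) binom_pmf N q1 k * (binom_cdf N q0 k.-1) ^+ n.
Proof.
move=> a0 a1 b0 b1 p0 N0 E00 H0 H1.
pose G k := binom_pmf N q1 k * (binom_cdf N q0 k.-1) ^+ n.
have G0 k : 0 <= G k by rewrite mulr_ge0 ?pmf_ge0 ?exprn_ge0 ?cdf_ge0.
have pN : 0 < p * N%:R by rewrite mulr_gt0 // ltr0n.
have step1 : \sum_(k < N.+1 | p * N%:R <= k%:R) G k <= \sum_(1 <= k < N.+1) G k.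
  rewrite -(big_mkord (fun k => p * N%:R <= k%:R)) big_mkcond /= (big_ltn (m := 0)) //=.
  rewrite ifF; last by apply/negbTE; rewrite -ltNge.
  rewrite add0r; apply: ler_sum => k _; case: ifP => // _.
apply: le_trans step1.
pose T := \sum_(k < N.+1 | p * N%:R <= k%:R) binom_pmf N q1 k.
have step2 : T * (1 - n%:R * E0) <= \sum_(k < N.+1 | p * N%:R <= k%:R) G k.
  rewrite /T mulr_suml; apply: ler_sum => k hk.
  rewrite /G ler_wpM2l ?pmf_ge0 //.
  have k0 : (0 < k)%N by rewrite -(ltr0n R); apply: lt_le_trans hk.
  have hc := cdf_lower q0 p E0 N k a0 a1 k0 (ltn_ord k : (k <= N)%N) hk H0.
  have hb := bernoulli_ineq _ n (cdf_ge0 q0 N k.-1 a0 a1).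
  have hn : 0 <= n%:R :> R by [].
  nra.
apply: le_trans step2.
have T1 : T <= 1.
  rewrite -(@pmf_sum1 R q1 N); apply: (@sum_sub_le R N.+1 _ xpredT) => // i.
  by rewrite pmf_ge0.
have T0 : 0 <= T by rewrite sumr_ge0 // => i _; rewrite pmf_ge0.
have TE : 1 - E1 <= T.
  have := @pmf_sum1 R q1 N.
  rewrite (bigID (fun k : 'I_N.+1 => p * N%:R <= k%:R)) /=.
  have -> : \sum_(i < N.+1 | ~~ (p * N%:R <= i%:R)) binom_pmf N q1 i =
      \sum_(i < N.+1 | i%:R < p * N%:R) binom_pmf N q1 i.
    by apply: eq_bigl => i; rewrite ltNge.
  rewrite -/T; lra.
have hn : 0 <= n%:R * E0 by rewrite mulr_ge0.
nra.
Qed.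

End SB.

Lemma expR_sq_bound (R : realType) (x : R) : 0 <= x -> x ^+ 2 * expR (- x) <= 2.
Proof.
move=> x0.
have h := @expR_ge1Dxn R x 1 x0.
have e : expR x * expR (- x) = 1 by rewrite expRxMexpNx_1.
have ep : 0 < expR (- x) by rewrite expR_gt0.
have f : (2`!)%:R = 2 :> R by [].
rewrite f in h.
have h2 : x ^+ 2 <= 2 * expR x by lra.
have : x ^+ 2 * expR (- x) <= 2 * expR x * expR (- x) by rewrite ler_wpM2r // ltW.
by rewrite -mulrA e mulr1.
Qed.

Theorem mainTheorem3 (R : realType) (q0 q1 : R) (NR : nat -> nat)
  (hq0 : 0 <= q0) (hq01 : q0 < q1) (hq1 : q1 <= 1)
  (hNRpos : forall N, (0 < NR N)%N)
  (hNRO : exists C : nat, \forall N \near \oo, (NR N <= C * N)%N) :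
  S_seq q0 q1 NR @ \oo --> (1 : R).
Proof.
pose p := (q0 + q1) / 2.
have p0 : 0 < p by rewrite /p; lra.
have [d0 d00 H0] := @chernoff_tail R q0 p hq0 ltac:(rewrite /p; lra) ltac:(rewrite /p; lra).
have [d1 d10 H1] := @lower_tail R q1 p p0 ltac:(rewrite /p; lra) hq1.
have [C hC] := hNRO.
apply/cvgrPdist_le => eps eps0.
pose A := d0 ^+ 2. pose B := d1 ^+ 2.
have A0 : 0 < A by rewrite exprn_gt0.
have B0 : 0 < B by rewrite exprn_gt0.
pose u := 2 * C%:R / A + 2 / B.
near=> N.
have hN1 : (0 < N)%N by near: N; apply: nbhs_infty_gt.
have hNR : (NR N <= C * N)%N by near: N.
have hNK : u / eps <= N%:R by near: N; apply: nbhs_infty_ger.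
have Nr1 : 1 <= N%:R :> R by rewrite ler1n.
pose e0 := expR (- (d0 * N%:R)). pose e1 := expR (- (d1 * N%:R)).
have e00 : 0 <= e0 by apply: expR_ge0.
have e10 : 0 <= e1 by apply: expR_ge0.
have Sup := @S_upper R q0 q1 N (NR N) hq0 ltac:(lra) ltac:(lra) hq1.
have Slo := @S_lower R q0 q1 p e0 e1 N (NR N) hq0 ltac:(lra) ltac:(lra) hq1 p0 hN1 e00 (H0 N) (H1 N).
rewrite /S_seq ger0_norm ?subr_ge0 //.
have hNRr : (NR N)%:R <= C%:R * N%:R :> R by rewrite -natrM ler_nat.
have F0 : A * (N%:R ^+ 2 * e0) <= 2.
  have := expR_sq_bound _ _ (mulr_ge0 (ltW d00) (ler0n R N)).
  by rewrite /A /e0 exprMn mulrA.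
have F1 : B * (N%:R ^+ 2 * e1) <= 2.
  have := expR_sq_bound _ _ (mulr_ge0 (ltW d10) (ler0n R N)).
  by rewrite /B /e1 exprMn mulrA.
have G0 : C%:R * N%:R * e0 * N%:R <= 2 * C%:R / A.
  rewrite ler_pdivlMr //.
  have hC0 : 0 <= C%:R :> R by [].
  have -> : C%:R * N%:R * e0 * N%:R * A = C%:R * (A * (N%:R ^+ 2 * e0)) by ring.
  by rewrite mulrC ler_wpM2r.
have G1 : e1 * N%:R <= 2 / B.
  rewrite ler_pdivlMr //.
  have : e1 * N%:R <= N%:R ^+ 2 * e1.
    by rewrite expr2 mulrC -mulrA ler_peMl // mulr_ge0.
  nra.
have hNe : u <= N%:R * eps by rewrite -ler_pdivrMr.
have Np : 0 < N%:R :> R by lra.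
suff : (e1 + (NR N)%:R * e0) * N%:R <= eps * N%:R.
  rewrite ler_pM2r //; lra.
have : (NR N)%:R * e0 * N%:R <= C%:R * N%:R * e0 * N%:R.
  by rewrite ler_wpM2r // ler_wpM2r.
rewrite /u in hNe; nra.
Unshelve. all: end_near.
Qed.
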